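(* Let $\alpha\in[0,1]$ and let $f$ satisfy assumption A.$\alpha$. Consider iterates $x_{k+1}=x_k+s_k$, $k\ge0$, where $(H_k+M_k)s_k=-g_k+r_k$ with $\|r_k\|\le\min[\kappa_{rg}\|g_k\|,\kappa_{rs}\|M_ks_k\|]$ ($\kappa_{rg}\in[0,1)$, $\kappa_{rs}>0$), $M_k$ symmetric positive semidefinite, $\lambda_{\min}(M_k)\le\bar\kappa_\lambda\|s_k\|^\alpha$ for some $\bar\kappa_\lambda>1$ independent of $k$, and $\kappa(M_k)\le\kappa_\kappa$ for some $\kappa_\kappa\ge1$ independent of $k$. Then there exists $\bar\kappa_{s,\alpha}>0$ independent of $k$ such that for all $k\ge0$ $$\|s_k\|\ge\bar\kappa_{s,\alpha}\|g_{k+1}\|^{1/(1+\alpha)};$$ one can take $\bar\kappa_{s,\alpha}=\big[L_{H,\alpha}(1+\alpha)^{-1}+\kappa_\kappa(1+\kappa_{rs})\bar\kappa_\lambda\big]^{-1/(1+\alpha)}$.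
   Context: Assumption A.$\alpha$: $f:\mathbb{R}^n\to\mathbb{R}$ is twice continuously differentiable and bounded below, $\|\nabla f(x)-\nabla f(y)\|\le L_g\|x-y\|$ and $\|\nabla^2f(x)-\nabla^2f(y)\|\le L_{H,\alpha}\|x-y\|^\alpha$ for all $x,y\in\mathbb{R}^n$. $g_k=\nabla f(x_k)$, $H_k=\nabla^2f(x_k)$. For a symmetric positive semidefinite matrix $M$, the condition number is $\kappa(M)=\lambda_{\max}(M)/\lambda_{\min}(M)$ if $M\succ0$, $\kappa(M)=+\infty$ if $\lambda_{\min}(M)=0$ and $M\ne0$, and $\kappa(0)=1$. *)

(* Defs.v *)
From Stdlib Require Import Reals.
From mathcomp Require Import ssreflect ssrfun ssrbool eqtype ssrnat seq fintype bigop.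
Set Implicit Arguments. Unset Strict Implicit. Unset Printing Implicit Defensive.
Local Open Scope R_scope.

Definition vec (n : nat) := 'I_n -> R.
Definition mat (n : nat) := 'I_n -> 'I_n -> R.

Definition vadd n (u v : vec n) : vec n := fun i => u i + v i.
Definition vsub n (u v : vec n) : vec n := fun i => u i - v i.
Definition vopp n (u : vec n) : vec n := fun i => - u i.
Definition dot n (u v : vec n) : R := \big[Rplus/0]_(i < n) (u i * v i).
Definition vnorm n (u : vec n) : R := sqrt (dot u u).
Definition mv n (A : mat n) (v : vec n) : vec n :=
  fun i => \big[Rplus/0]_(j < n) (A i j * v j).
Definition madd n (A B : mat n) : mat n := fun i j => A i j + B i j.
Definition msub n (A B : mat n) : mat n := fun i j => A i j - B i j.

Definition rpow (x a : R) : R :=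
  if Req_EM_T x 0 then (if Req_EM_T a 0 then 1 else 0) else Rpower x a.

Definition is_gradient n (f : vec n -> R) (g : vec n -> vec n) : Prop :=
  forall x eps, 0 < eps -> exists delta, 0 < delta /\
    forall h : vec n, vnorm h < delta ->
      Rabs (f (vadd x h) - f x - dot (g x) h) <= eps * vnorm h.

Definition is_derivative_map n (g : vec n -> vec n) (H : vec n -> mat n) : Prop :=
  forall x eps, 0 < eps -> exists delta, 0 < delta /\
    forall h : vec n, vnorm h < delta ->
      vnorm (vsub (vsub (g (vadd x h)) (g x)) (mv (H x) h)) <= eps * vnorm h.

Definition mat_continuous n (H : vec n -> mat n) : Prop :=
  forall x eps, 0 < eps -> exists delta, 0 < delta /\
    forall y : vec n, vnorm (vsub y x) < delta ->
      forall v : vec n, vnorm (mv (msub (H y) (H x)) v) <= eps * vnorm v.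

Definition mat_symmetric n (A : mat n) : Prop := forall i j, A i j = A j i.
Definition psd n (A : mat n) : Prop := forall v : vec n, 0 <= dot v (mv A v).
Definition is_zero_mat n (A : mat n) : Prop := forall i j, A i j = 0.

Definition is_eigenvalue n (A : mat n) (l : R) : Prop :=
  exists v : vec n, (exists i, v i <> 0) /\ forall i, mv A v i = l * v i.
Definition is_lambda_min n (A : mat n) (l : R) : Prop :=
  is_eigenvalue A l /\ forall m, is_eigenvalue A m -> l <= m.
Definition is_lambda_max n (A : mat n) (l : R) : Prop :=
  is_eigenvalue A l /\ forall m, is_eigenvalue A m -> m <= l.

(* condition number of a symmetric PSD matrix, value in R ∪ {+oo}
   (None = +oo): kappa(0) = 1, +oo if lambda_min = 0 and A <> 0,
   lambda_max/lambda_min if A is positive definite. *)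
Definition is_cond_number n (A : mat n) (k : option R) : Prop :=
  (is_zero_mat A /\ k = Some 1) \/
  (~ is_zero_mat A /\ exists lmin lmax, is_lambda_min A lmin /\ is_lambda_max A lmax /\
     ((lmin = 0 /\ k = None) \/ (0 < lmin /\ k = Some (lmax / lmin)))).

Definition ole (k : option R) (c : R) : Prop :=
  match k with Some v => v <= c | None => False end.

(* Main.v *)
Require Import Defs.
From Stdlib Require Import Reals Lra.
From mathcomp Require Import all_boot all_algebra.
From mathcomp Require Import all_classical all_reals all_analysis.
From mathcomp Require Import Rstruct Rstruct_topology.
From Stdlib Require Import Lra.
Import GRing.Theory Num.Theory.
Import numFieldNormedType.Exports.
Local Open Scope classical_set_scope.
Local Open Scope ring_scope.
Local Open Scope R_scope.

Lemma dotE n (u v : vec n) : dot u v = (\sum_(i < n) u i * v i)%R.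
Proof. reflexivity. Qed.

Lemma dot_comm n (u v : vec n) : dot u v = dot v u.
Proof. rewrite !dotE; apply: eq_bigr => i _; exact: mulrC. Qed.

Lemma dot_add_r n (u v w : vec n) : dot u (fun i => v i + w i) = dot u v + dot u w.
Proof. rewrite !dotE -big_split /=; apply: eq_bigr => i _; exact: mulrDr. Qed.

Lemma dot_scal_r n (u v : vec n) a : dot u (fun i => a * v i) = a * dot u v.
Proof. rewrite !dotE; change (a * ?x) with (a * x)%R; rewrite mulr_sumr.
apply: eq_bigr => i _ /=; rewrite mulrCA //. Qed.

Lemma dot_ext n (u v u' v' : vec n) : (forall i, u i = u' i) -> (forall i, v i = v' i) ->
  dot u v = dot u' v'.
Proof. move=> H1 H2; rewrite !dotE; apply: eq_bigr => i _; by rewrite H1 H2. Qed.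

Lemma dot_ge0 n (u : vec n) : 0 <= dot u u.
Proof. rewrite dotE; apply/RleP; apply: sumr_ge0 => i _; exact: mulr_ge0_le0 || exact: sqr_ge0. Qed.

Lemma dot_eq0 n (u : vec n) : dot u u = 0 -> forall i, u i = 0.
Proof.
rewrite dotE => H i.
have := @psumr_eq0P _ _ _ _ (fun i _ => sqr_ge0 (u i)) H i isT.
move=> /eqP; rewrite mulf_eq0 orbb => /eqP //.
Qed.

Lemma dot_opp_r n (u v : vec n) : dot u (fun i => - v i) = - dot u v.
Proof. have -> : - dot u v = -1 * dot u v by lra.
rewrite -(dot_scal_r _ u v (-1)); apply: dot_ext => i //=; lra. Qed.

Lemma dot_sub_r n (u v w : vec n) : dot u (fun i => v i - w i) = dot u v - dot u w.
Proof. unfold Rminus; rewrite -dot_opp_r -dot_add_r //. Qed.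

Lemma dot_add_l n (u v w : vec n) : dot (fun i => v i + w i) u = dot v u + dot w u.
Proof. rewrite dot_comm dot_add_r (dot_comm _ u v) (dot_comm _ u w) //. Qed.

Lemma dot_scal_l n (u v : vec n) a : dot (fun i => a * v i) u = a * dot v u.
Proof. rewrite dot_comm dot_scal_r dot_comm //. Qed.

Lemma vnorm_ge0 n (u : vec n) : 0 <= vnorm u.
Proof. apply sqrt_pos. Qed.

Lemma vnorm_sq n (u : vec n) : vnorm u * vnorm u = dot u u.
Proof. apply sqrt_sqrt, dot_ge0. Qed.

Lemma CS n (u v : vec n) : dot u v * dot u v <= dot u u * dot v v.
Proof.
have Hq : forall t, 0 <= dot u u + 2 * t * dot u v + t * t * dot v v.
  move=> t; have := dot_ge0 _ (fun i => u i + t * v i).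
  rewrite dot_add_l !dot_add_r !dot_scal_l !dot_scal_r (dot_comm _ v u). lra.
have Hv := dot_ge0 _ v; have Hu := dot_ge0 _ u.
destruct (Rle_lt_or_eq_dec _ _ Hv) as [Hp|H0].
- have := Hq (- dot u v / dot v v).
  have -> : dot u u + 2 * (- dot u v / dot v v) * dot u v +
     (- dot u v / dot v v) * (- dot u v / dot v v) * dot v v
     = dot u u - dot u v * dot u v / dot v v by field; lra.
  move=> H.
  have : 0 <= (dot u u - dot u v * dot u v / dot v v) * dot v v by apply Rmult_le_pos; lra.
  have -> : (dot u u - dot u v * dot u v / dot v v) * dot v v = dot u u * dot v v - dot u v * dot u v by field; lra.
  lra.
- have Hz := dot_eq0 _ _ (esym H0).
  have -> : dot u v = dot u (fun i => 0 * v i) by apply: dot_ext => i //; rewrite Hz; lra.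
  rewrite dot_scal_r; nra.
Qed.

Lemma CS_norm n (u v : vec n) : dot u v <= vnorm u * vnorm v.
Proof.
have H := CS _ u v. rewrite -!vnorm_sq in H.
have := vnorm_ge0 _ u; have := vnorm_ge0 _ v.
move=> a b.
have HP : 0 <= vnorm u * vnorm v by nra.
have E : vnorm u * vnorm u * (vnorm v * vnorm v) = (vnorm u * vnorm v) * (vnorm u * vnorm v) by ring.
rewrite E in H. set P := vnorm u * vnorm v in HP H *. set d := dot u v in H *.
destruct (Rle_dec d P) as [|Hn]; first done. exfalso. nra.
Qed.

Lemma mvE n (A : mat n) v i : mv A v i = (\sum_(j < n) A i j * v j)%R.
Proof. reflexivity. Qed.

Lemma mv_madd n (A B : mat n) v i : mv (madd A B) v i = mv A v i + mv B v i.
Proof. rewrite !mvE -big_split; apply: eq_bigr => j _ /=; rewrite /madd; exact: mulrDl. Qed.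

Lemma mv_msub n (A B : mat n) v i : mv (msub A B) v i = mv A v i - mv B v i.
Proof. rewrite !mvE; change (?a - ?b) with (a + - b)%R; rewrite -sumrN -big_split; apply: eq_bigr => j _ /=; rewrite /msub.
change (A i j - B i j) with (A i j + - B i j)%R. rewrite mulrDl mulNr //. Qed.

Lemma mv_add n (A : mat n) v w i : mv A (fun j => v j + w j) i = mv A v i + mv A w i.
Proof. rewrite !mvE -big_split; apply: eq_bigr => j _ /=; exact: mulrDr. Qed.

Lemma mv_scal n (A : mat n) v a i : mv A (fun j => a * v j) i = a * mv A v i.
Proof. rewrite !mvE; change (a * ?x) with (a * x)%R; rewrite mulr_sumr.
apply: eq_bigr => j _ /=; rewrite mulrCA //. Qed.

Lemma mv_ext n (A : mat n) v w : (forall j, v j = w j) -> forall i, mv A v i = mv A w i.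
Proof. move=> H i; rewrite !mvE; apply: eq_bigr => j _; by rewrite H. Qed.

Lemma dot_sym n (A : mat n) u v : mat_symmetric A -> dot (mv A u) v = dot u (mv A v).
Proof.
move=> HA; rewrite !dotE.
under eq_bigr => i _ do rewrite mvE mulr_suml.
under [RHS]eq_bigr => i _ do rewrite mvE mulr_sumr.
rewrite exchange_big /=; apply: eq_bigr => i _; apply: eq_bigr => j _.
rewrite (HA j i). idtac.
by rewrite mulrA (mulrC (u i)).
Qed.

Lemma vnorm_scal n (v : vec n) t : vnorm (fun i => t * v i) = Rabs t * vnorm v.
Proof.
rewrite /vnorm dot_scal_l dot_scal_r -Rmult_assoc sqrt_mult.
- rewrite -sqrt_Rsqr_abs //.
- nra.
- apply dot_ge0.
Qed.
Local Open Scope ring_scope.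

Section Cont.
Variable n : nat.
Definition conv (w : 'rV[R]_n) : vec n := fun i => w ord0 i.

Lemma cont_sum (T : topologicalType) (I : Type) (r : seq I) (P : pred I) (F : I -> T -> R) :
  (forall j, continuous (F j)) -> continuous (fun w => \big[+%R/0]_(j <- r | P j) F j w).
Proof.
move=> HF; elim: r => [|a r IH].
  under eq_fun do rewrite big_nil. exact: cst_continuous.
under eq_fun do rewrite big_cons.
case: (P a) => //.
move=> x. exact: (@continuousD R R^o T (F a) (fun w => \big[+%R/0]_(j <- r | P j) F j w) x (HF a x) (IH x)).
Qed.

Lemma cont_coord i : continuous (fun w : 'rV[R]_n => conv w i).
Proof. exact: coord_continuous. Qed.

Lemma cont_mv (M : mat n) i : continuous (fun w : 'rV[R]_n => mv M (conv w) i).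
Proof.
apply: (@cont_sum _ _ _ _ (fun j w => M i j * conv w j)) => j x.
apply: continuousM; [exact: cst_continuous | exact: cont_coord].
Qed.

Lemma cont_dot (F G : 'I_n -> 'rV[R]_n -> R) : (forall i, continuous (F i)) -> (forall i, continuous (G i)) ->
  continuous (fun w => dot (fun i => F i w) (fun i => G i w)).
Proof.
move=> HF HG; apply: (@cont_sum _ _ _ _ (fun j w => F j w * G j w)) => j x.
apply: continuousM; [exact: HF | exact: HG].
Qed.
End Cont.
Arguments conv {n}.

Lemma conv_row n (w : vec n) : conv (\row_j w j) = w.
Proof. apply: funext => i; rewrite /conv mxE //. Qed.

Lemma sq_le_dot n (w : vec n) i : w i * w i <= dot w w.
Proof.
rewrite /dot (bigD1 i) //=. rewrite lerDl. apply: sumr_ge0 => j _. exact: sqr_ge0.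
Qed.

Lemma exists_max_sphere n (M : mat n) : (0 < n)%N ->
  exists v : vec n, (dot v v = 1)%coqR /\
    forall w, (dot w w = 1)%coqR -> (dot (mv M w) (mv M w) <= dot (mv M v) (mv M v))%coqR.
Proof.
move=> n0.
pose F := fun w : 'rV[R]_n => dot (mv M (conv w)) (mv M (conv w)).
pose G := fun w : 'rV[R]_n => dot (conv w) (conv w).
pose S := G @^-1` [set 1].
have cF : continuous F.
  apply: (@cont_dot n (fun i w => mv M (conv w) i) (fun i w => mv M (conv w) i)) => i; exact: cont_mv.
have cG : continuous G.
  apply: (@cont_dot n (fun i w => conv w i) (fun i w => conv w i)) => i; exact: cont_coord.
have clS : closed S.
  apply: preimage_closed; last exact: closed_eq.
  by move=> x _; apply: cG.
have cube : compact [set v : 'rV[R]_n | forall i, `[(-1)%R, 1%R]%classic (v ord0 i)].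
  apply: (@rV_compact R n (fun=> `[(-1)%R, 1%R]%classic)) => _; exact: segment_compact.
have cS : compact S.
  apply: (subclosed_compact clS cube) => w /= Hw i.
  have := sq_le_dot _ (conv w) i. rewrite -/(G w) Hw /conv => H.
  rewrite /= in_itv /=. move/RleP: H => H. apply/andP; split; apply/RleP.
  1,2: change ((w ord0 i * w ord0 i)%coqR <= 1)%coqR in H.
  change (Ropp 1 <= w ord0 i)%coqR; nra. change (w ord0 i <= 1)%coqR; nra.
have S0 : S !=set0.
  pose i0 : 'I_n := Ordinal n0.
  exists (\row_j (if j == i0 then 1 else 0)).
  rewrite /S /G /= /dot (bigD1 i0) //= big1 /=.
    by rewrite /conv !mxE eqxx Rmult_1_r Rplus_0_r.
  by move=> j /negbTE Hj; rewrite /conv !mxE Hj Rmult_0_r.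
have [c cS' Hc] := EVT_max_rV S0 cS (@continuous_subspaceT _ _ S F cF).
exists (conv c); split.
  by move: cS'; rewrite inE.
move=> w Hw. apply/RleP. have := Hc (\row_j w j). rewrite /F conv_row. apply.
by rewrite inE /S /G /= conv_row.
Qed.

Local Open Scope R_scope.

Lemma ord_pos n (i : 'I_n) : (0 < n)%N.
Proof. exact: (leq_ltn_trans (leq0n i) (ltn_ord i)). Qed.

Lemma quad_zero B C : C <= 0 -> (forall t, 2 * t * B + t * t * C <= 0) -> B = 0.
Proof.
move=> HC H. have := H (B / (1 - C)).
have Hp : 0 < 1 - C by lra.
move=> H1.
have : 0 <= B * B * (2 - C) by nra.
have E : (2 * (B / (1 - C)) * B + B / (1 - C) * (B / (1 - C)) * C) * ((1 - C) * (1 - C))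
   = B * B * (2 - 2*C + C) by field; lra.
have : (2 * (B / (1 - C)) * B + B / (1 - C) * (B / (1 - C)) * C) * ((1 - C) * (1 - C)) <= 0.
  have Hpp : 0 <= (1 - C) * (1 - C) by nra.
  have := Rmult_le_compat_r _ _ _ Hpp H1. lra.
rewrite E => H2 H3. nra.
Qed.

Lemma mv_zero n (M : mat n) w : (forall i, w i = 0) -> forall i, mv M w i = 0.
Proof.
move=> Hw i. rewrite (mv_ext _ M w (fun j => 0 * w j)); last by move=> j; rewrite Hw; lra.
rewrite mv_scal; lra.
Qed.

Lemma dot_zero_l n (u v : vec n) : (forall i, u i = 0) -> dot u v = 0.
Proof.
move=> Hu. rewrite (dot_ext _ u v (fun i => 0 * u i) v) //; last by move=> i; rewrite Hu; lra.
rewrite dot_scal_l; lra.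
Qed.

Lemma opnorm_le n (M : mat n) lmax : mat_symmetric M -> psd M -> is_lambda_max M lmax ->
  0 <= lmax -> forall w, vnorm (mv M w) <= lmax * vnorm w.
Proof.
move=> Hsym Hpsd [[e [[i0 _] _]] Hmax] Hl0.
have n0 := ord_pos _ i0.
have [v [Hv Hvmax]] := exists_max_sphere _ M n0.
set c := dot (mv M v) (mv M v) in Hvmax.
have Hc0 : 0 <= c by apply dot_ge0.
set Q := fun w : vec n => dot (mv M w) (mv M w).
have Hle : forall w, Q w <= c * dot w w.
  move=> w. have Hd := dot_ge0 _ w.
  destruct (Rle_lt_or_eq_dec _ _ Hd) as [Hp|H0].
  - pose a := / sqrt (dot w w).
    have Ha : a * a * dot w w = 1.
      rewrite /a -Rinv_mult sqrt_sqrt; last lra. field; lra.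
    have := Hvmax (fun i => a * w i).
    rewrite dot_scal_l dot_scal_r.
    rewrite (dot_ext _ (mv M (fun i => a * w i)) (mv M (fun i => a * w i))
              (fun i => a * mv M w i) (fun i => a * mv M w i)); try (move=> i; apply mv_scal).
    rewrite dot_scal_l dot_scal_r. move=> H. have := H ltac:(rewrite -Ha; ring).
    rewrite /Q. move=> H2.
    have Hq := dot_ge0 _ (mv M w).
    have : a * a * dot (mv M w) (mv M w) * dot w w <= c * dot w w by nra.
    have -> : a * a * dot (mv M w) (mv M w) * dot w w = dot (mv M w) (mv M w) by
      (transitivity (a * a * dot w w * dot (mv M w) (mv M w)); [ring | rewrite Ha; ring]).
    done.
  - have Hz := dot_eq0 _ _ (esym H0).
    rewrite /Q dot_zero_l; last by apply mv_zero.
    nra.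
have HB : forall w, dot (mv M v) (mv M w) = c * dot v w.
  move=> w.
  have : dot (mv M v) (mv M w) - c * dot v w = 0; last lra.
  apply (quad_zero _ (Q w - c * dot w w)); first by have := Hle w; lra.
  move=> t. have := Hle (fun i => v i + t * w i).
  rewrite /Q.
  rewrite (dot_ext _ (mv M (fun i => v i + t * w i)) (mv M (fun i => v i + t * w i))
              (fun i => mv M v i + t * mv M w i) (fun i => mv M v i + t * mv M w i));
    try (move=> i; rewrite mv_add mv_scal //).
  rewrite !dot_add_l !dot_add_r !dot_scal_l !dot_scal_r (dot_comm _ w v) (dot_comm _ (mv M w) (mv M v)).
  rewrite Hv. rewrite -/c. lra.
set z := fun i => mv M (mv M v) i - c * v i.
have Hz : forall i, z i = 0.
  apply dot_eq0.
  rewrite {1}/z dot_comm dot_sub_r (dot_comm _ z (mv M (mv M v))) dot_sym // HB dot_scal_r (dot_comm _ z v). lra.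
set mu := sqrt c.
have Hmu : mu * mu = c by apply sqrt_sqrt.
have Hmu0 : 0 <= mu by apply sqrt_pos.
have Hmul : mu <= lmax.
  set u := fun i => mv M v i + mu * v i.
  have Hu : forall i, mv M u i = mu * u i.
    move=> i. rewrite /u mv_add mv_scal. have := Hz i. rewrite /z. nra.
  case: (pselect (exists i, u i <> 0)) => [Hex|Hnex].
  - apply Hmax. exists u; split => //.
  - have Hu0 : forall i, mv M v i = - mu * v i.
      move=> i. destruct (Req_dec (u i) 0) as [E|E]; first by rewrite /u in E; lra.
      by exfalso; apply Hnex; exists i.
    have := Hpsd v. rewrite (dot_ext _ v (mv M v) v (fun i => - mu * v i)) // dot_scal_r Hv.
    lra.
move=> w.
rewrite /vnorm.
have Hw := dot_ge0 _ w.
apply (Rle_trans _ (sqrt (lmax * lmax * dot w w))).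
  apply sqrt_le_1_alt. have := Hle w. rewrite /Q. move=> H1.
  have H2 : c <= lmax * lmax by rewrite -Hmu; nra.
  apply (Rle_trans _ _ _ H1). apply Rmult_le_compat_r => //.
rewrite sqrt_mult; [|nra|lra]. rewrite sqrt_square //. lra.
Qed.

Lemma vnorm_ext n (u v : vec n) : (forall i, u i = v i) -> vnorm u = vnorm v.
Proof. move=> H; rewrite /vnorm (dot_ext _ u u v v) //. Qed.

Lemma CS_abs n (u v : vec n) : Rabs (dot u v) <= vnorm u * vnorm v.
Proof.
apply Rabs_le; split; last by apply CS_norm.
have := CS_norm _ u (fun i => -1 * v i). rewrite dot_scal_r vnorm_scal.
rewrite Rabs_Ropp Rabs_R1. lra.
Qed.

Lemma psi_deriv n (g : vec n -> vec n) (H : vec n -> mat n) (x s u : vec n) t :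
  is_derivative_map g H ->
  derivable_pt_lim (fun t => dot u (g (fun i => x i + t * s i))) t
                   (dot u (mv (H (fun i => x i + t * s i)) s)).
Proof.
move=> Hd eps Heps.
have Hu := vnorm_ge0 _ u; have Hs := vnorm_ge0 _ s.
set A := vnorm u * vnorm s + 1.
have HA : 0 < A by rewrite /A; nra.
set xt := fun i => x i + t * s i.
have He' : 0 < eps / A by apply Rdiv_lt_0_compat.
have [delta [Hdel Hb]] := Hd xt (eps / A) He'.
have Hdp : 0 < delta / (vnorm s + 1) by apply Rdiv_lt_0_compat; lra.
exists (mkposreal _ Hdp) => h Hh0 /= Hhd.
set hs := fun i => h * s i.
have Hnhs : vnorm hs = Rabs h * vnorm s by apply vnorm_scal.
have Hah : 0 < Rabs h by apply Rabs_pos_lt.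
have Hlt : vnorm hs < delta.
  rewrite Hnhs.
  have : Rabs h * (vnorm s + 1) < delta.
    have := Rmult_lt_compat_r (vnorm s + 1) _ _ ltac:(lra) Hhd.
    rewrite /Rdiv Rmult_assoc Rinv_l; lra.
  nra.
have Hb' := Hb hs Hlt.
have Eg : g (vadd xt hs) = g (fun i => x i + (t + h) * s i).
  f_equal; apply: funext => i; rewrite /vadd /xt /hs; ring.
rewrite Eg in Hb'.
set D := vsub (vsub (g (fun i => x i + (t + h) * s i)) (g xt)) (mv (H xt) hs) in Hb'.
have ED : dot u D = dot u (g (fun i => x i + (t + h) * s i)) - dot u (g xt)
                    - h * dot u (mv (H xt) s).
  rewrite -dot_scal_r -!dot_sub_r. apply dot_ext => // i.
  rewrite /D /vsub /hs mv_scal //.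
have Hcs := CS_abs _ u D.
have E2 : (dot u (g (fun i => x i + (t + h) * s i)) - dot u (g xt)) / h - dot u (mv (H xt) s)
          = dot u D / h.
  rewrite ED; field; auto.
rewrite /xt in E2 *. rewrite E2.
rewrite /Rdiv Rabs_mult Rabs_inv.
apply (Rmult_lt_reg_r (Rabs h)) => //.
rewrite /Rdiv Rmult_assoc Rinv_l; last lra.
rewrite Rmult_1_r.
apply (Rle_lt_trans _ _ _ Hcs).
have HD := vnorm_ge0 _ D.
have : vnorm u * vnorm D <= vnorm u * (eps / A * (Rabs h * vnorm s)).
  apply Rmult_le_compat_l => //. rewrite -Hnhs //.
move=> H1. apply (Rle_lt_trans _ _ _ H1).
have : vnorm u * vnorm s * (eps / A) < eps.
  apply (Rmult_lt_reg_r A) => //. rewrite /Rdiv. 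
  have -> : vnorm u * vnorm s * (eps * / A) * A = vnorm u * vnorm s * eps by field; lra.
  rewrite /A; nra.
move=> H2.
have -> : vnorm u * (eps / A * (Rabs h * vnorm s)) = (vnorm u * vnorm s * (eps / A)) * Rabs h by ring.
apply Rmult_lt_compat_r => //.
Qed.

Lemma dpl_loc (f g : R -> R) x l d : 0 < d -> (forall y, Rabs (y - x) < d -> f y = g y) ->
  derivable_pt_lim g x l -> derivable_pt_lim f x l.
Proof.
move=> Hd Hfg Hg eps Heps.
have [del Hdel] := Hg eps Heps.
have Hm : 0 < Rmin del d by apply Rmin_pos; [apply cond_pos|lra].
exists (mkposreal _ Hm) => h Hh0 /= Hh.
rewrite !Hfg; first (apply Hdel => //; apply (Rlt_le_trans _ _ _ Hh), Rmin_l).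
- rewrite Rminus_diag Rabs_R0; lra.
- have -> : x + h - x = h by ring. apply (Rlt_le_trans _ _ _ Hh), Rmin_r.
Qed.

Lemma mvt_le (phi phi' : R -> R) :
  (forall c, 0 < c < 1 -> derivable_pt_lim phi c (phi' c)) ->
  (forall c, 0 <= c <= 1 -> continuity_pt phi c) ->
  (forall c, 0 < c < 1 -> phi' c <= 0) -> phi 1 <= phi 0.
Proof.
move=> Hd Hc Hn.
pose pr1 := fun c (P : 0 < c < 1) => exist (fun l => derivable_pt_abs phi c l) (phi' c) (Hd c P).
pose pr2 := fun c (P : 0 < c < 1) => derivable_pt_id c.
have [c [P E]] := @Stdlib.Reals.MVT.MVT phi Ranalysis1.id 0 1 pr1 pr2 Rlt_0_1 Hc
   (fun c _ => derivable_continuous_pt _ _ (derivable_pt_id c)).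
rewrite derive_pt_id /pr1 /= in E.
have := Hn c P. rewrite /Ranalysis1.id in E. lra.
Qed.

Definition pfun (alpha t : R) : R :=
  if Rlt_dec 0 t then Rpower t (1 + alpha) / (1 + alpha) else 0.

Lemma Rpower_le1 x a : 0 < x <= 1 -> 0 <= a -> Rpower x a <= 1.
Proof.
move=> Hx Ha. rewrite /Rpower -exp_0.
destruct (Req_dec x 1) as [->|Hne]; first by rewrite ln_1 Rmult_0_r; lra.
have : Rpower.ln x < 0 by rewrite -ln_1; apply ln_increasing; lra.
move=> Hl. destruct (Rle_lt_or_eq_dec _ _ Ha) as [Hp|<-].
- left; apply exp_increasing; nra.
- rewrite Rmult_0_l; lra.
Qed.

Lemma Rpower_1_base y : Rpower 1 y = 1.
Proof. rewrite /Rpower ln_1 Rmult_0_r exp_0 //. Qed.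

Lemma p_deriv alpha c : 0 <= alpha -> 0 < c -> derivable_pt_lim (pfun alpha) c (Rpower c alpha).
Proof.
move=> Ha Hc.
apply (dpl_loc _ (mult_real_fct (/ (1 + alpha)) (fun t => Rpower t (1 + alpha))) _ _ c) => //.
- move=> y Hy. rewrite /pfun /mult_real_fct. case: (Rlt_dec 0 y) => H.
  + rewrite /Rdiv Rmult_comm //.
  + exfalso. have := Rabs_def2 _ _ Hy. lra.
- have -> : Rpower c alpha = / (1 + alpha) * ((1 + alpha) * Rpower c (1 + alpha - 1)).
    have -> : 1 + alpha - 1 = alpha by ring. field; lra.
  apply derivable_pt_lim_scal, derivable_pt_lim_power => //.
Qed.

Lemma p_cont alpha c : 0 <= alpha -> 0 <= c -> continuity_pt (pfun alpha) c.
Proof.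
move=> Ha Hc. destruct (Rle_lt_or_eq_dec _ _ Hc) as [Hp|<-].
- apply derivable_continuous_pt. exists (Rpower c alpha). exact: p_deriv.
- move=> eps Heps.
  exists (Rmin eps 1); split; first by apply Rmin_pos; lra.
  move=> x [_ Hx]. rewrite /R_dist in Hx *.
  have H0 : pfun alpha 0 = 0 by rewrite /pfun; case: (Rlt_dec 0 0) => Hq //; lra.
  rewrite H0. change (Rabs (pfun alpha x - 0) < eps). change (Rabs (x - 0) < Rmin eps 1) in Hx.
  rewrite Rminus_0_r. rewrite Rminus_0_r in Hx.
  have Hx1 := Rlt_le_trans _ _ _ Hx (Rmin_l _ _).
  have Hx2 := Rlt_le_trans _ _ _ Hx (Rmin_r _ _).
  rewrite /pfun; case: (Rlt_dec 0 x) => Hxp; last by rewrite Rabs_R0; lra.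
  rewrite Rabs_right in Hx1; last lra. rewrite Rabs_right in Hx2; last lra.
  rewrite Rpower_plus Rpower_1 //.
  have Hle := Rpower_le1 x alpha ltac:(lra) Ha.
  have Hpos : 0 < Rpower x alpha by apply exp_pos.
  rewrite Rabs_right; last first.
    apply Rle_ge, Rmult_le_pos; [|left; apply Rinv_0_lt_compat; lra]. nra.
  apply (Rle_lt_trans _ x) => //.
  have : Rpower x alpha * x <= x by nra.
  move=> H1. rewrite /Rdiv.
  have Hi : / (1 + alpha) <= 1 by rewrite -Rinv_1; apply Rinv_le_contravar; lra.
  have Hi0 : 0 < / (1 + alpha) by apply Rinv_0_lt_compat; lra.
  nra.
Qed.

Lemma rpow_pos x a : 0 < x -> rpow x a = Rpower x a.
Proof. move=> Hx; rewrite /rpow; case: (Req_dec_T x 0) => E; [exfalso; lra | reflexivity]. Qed.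

Lemma rpow_ge0 x a : 0 <= rpow x a.
Proof.
rewrite /rpow; case: (Req_dec_T x 0) => E.
- case: (Req_dec_T a 0) => E2 /=; lra.
- left; apply exp_pos.
Qed.

Lemma taylor n (g : vec n -> vec n) (H : vec n -> mat n) L_H alpha (x s u : vec n) :
  0 <= alpha -> is_derivative_map g H -> 0 <= L_H ->
  (forall y z (v : vec n),
      vnorm (mv (msub (H y) (H z)) v) <= L_H * rpow (vnorm (vsub y z)) alpha * vnorm v) ->
  dot u (fun i => g (vadd x s) i - g x i - mv (H x) s i)
    <= vnorm u * L_H * rpow (vnorm s) alpha * vnorm s / (1 + alpha).
Proof.
move=> Ha Hd HL Hhol.
set K := vnorm u * L_H * rpow (vnorm s) alpha * vnorm s.
set l0 := dot u (mv (H x) s).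
pose psi := fun t => dot u (g (fun i => x i + t * s i)).
pose phi := minus_fct (minus_fct psi (fun t => t * l0)) (mult_real_fct K (pfun alpha)).
pose phi' := fun t => dot u (mv (H (fun i => x i + t * s i)) s) - 1 * l0 - K * Rpower t alpha.
have Hder : forall c, 0 < c < 1 -> derivable_pt_lim phi c (phi' c).
  move=> c Hc. apply derivable_pt_lim_minus.
  - apply derivable_pt_lim_minus; first exact: psi_deriv.
    apply (derivable_pt_lim_scal_right id). apply derivable_pt_lim_id.
  - apply derivable_pt_lim_scal, p_deriv => //; lra.
have Hcont : forall c, 0 <= c <= 1 -> continuity_pt phi c.
  move=> c Hc. apply continuity_pt_minus.
  - apply continuity_pt_minus.
    + apply derivable_continuous_pt. exists (dot u (mv (H (fun i => x i + c * s i)) s)).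
      exact: psi_deriv.
    + apply derivable_continuous_pt. exists (1 * l0).
      apply (derivable_pt_lim_scal_right id). apply derivable_pt_lim_id.
  - apply continuity_pt_scal, p_cont => //; lra.
have Hu := vnorm_ge0 _ u; have Hs := vnorm_ge0 _ s.
have Hneg : forall c, 0 < c < 1 -> phi' c <= 0.
  move=> c Hc. rewrite /phi'.
  have E1 : dot u (mv (H (fun i => x i + c * s i)) s) - 1 * l0
            = dot u (mv (msub (H (fun i => x i + c * s i)) (H x)) s).
    rewrite Rmult_1_l /l0 -dot_sub_r. apply dot_ext => // i. by rewrite mv_msub.
  rewrite E1.
  have H1 := CS_abs _ u (mv (msub (H (fun i => x i + c * s i)) (H x)) s).
  have H2 := Hhol (fun i => x i + c * s i) x s.
  have E2 : vnorm (vsub (fun i => x i + c * s i) x) = c * vnorm s.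
    rewrite (vnorm_ext _ _ (fun i => c * s i)); last by move=> i; rewrite /vsub; ring.
    rewrite vnorm_scal Rabs_pos_eq //; lra.
  rewrite E2 in H2.
  have H3 : L_H * rpow (c * vnorm s) alpha * vnorm s <= L_H * rpow (vnorm s) alpha * vnorm s * Rpower c alpha.
    destruct (Rle_lt_or_eq_dec _ _ Hs) as [Hsp|Hs0].
    + rewrite !rpow_pos //; last nra. rewrite -Rpower_mult_distr //; [|lra]. right; ring.
    + rewrite -Hs0 !Rmult_0_r Rmult_0_l. lra.
  have Hab := Rle_abs (dot u (mv (msub (H (fun i => x i + c * s i)) (H x)) s)).
  have H4 : vnorm u * vnorm (mv (msub (H (fun i => x i + c * s i)) (H x)) s)
            <= vnorm u * (L_H * rpow (vnorm s) alpha * vnorm s * Rpower c alpha).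
    apply Rmult_le_compat_l => //. lra.
  have -> : K * Rpower c alpha = vnorm u * (L_H * rpow (vnorm s) alpha * vnorm s * Rpower c alpha)
    by rewrite /K; ring.
  lra.
have Hm := mvt_le phi phi' Hder Hcont Hneg.
rewrite /phi /minus_fct /mult_real_fct /psi in Hm.
have P1 : pfun alpha 1 = 1 / (1 + alpha).
  rewrite /pfun; case: (Rlt_dec 0 1) => E; last lra. rewrite Rpower_1_base //.
have P0 : pfun alpha 0 = 0.
  rewrite /pfun; case: (Rlt_dec 0 0) => E //; lra.
rewrite P1 P0 in Hm.
have E1 : (fun i => x i + 1 * s i) = vadd x s by apply: funext => i; rewrite /vadd; ring.
have E0 : (fun i => x i + 0 * s i) = x by apply: funext => i; ring.
rewrite E1 E0 in Hm.
rewrite (dot_sub_r _ u (fun i => g (vadd x s) i - g x i) (mv (H x) s)) dot_sub_r -/l0.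
have -> : vnorm u * L_H * rpow (vnorm s) alpha * vnorm s / (1 + alpha) = K * (1 / (1 + alpha))
  by rewrite /K; field; lra.
lra.
Qed.

Lemma Ms_bound n (M : mat n) (s : vec n) alpha kappa_lam kappa_kap :
  0 <= kappa_lam -> 0 <= kappa_kap ->
  mat_symmetric M /\ psd M ->
  (forall l, is_lambda_min M l -> l <= kappa_lam * rpow (vnorm s) alpha) ->
  (exists c, is_cond_number M c /\ ole c kappa_kap) ->
  vnorm (mv M s) <= kappa_kap * kappa_lam * rpow (vnorm s) alpha * vnorm s.
Proof.
move=> Hl Hk [Hsym Hpsd] Hmin [c [Hc Hole]].
have Hs := vnorm_ge0 _ s. have Hr := rpow_ge0 (vnorm s) alpha.
case: Hc => [[Hz Ec]|[Hnz [lmin [lmax [Hmn [Hmx [[H0 Ec]|[Hp Ec]]]]]]]].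
- rewrite (vnorm_ext _ _ (fun i => 0 * s i)).
    rewrite vnorm_scal Rabs_R0 Rmult_0_l. repeat apply Rmult_le_pos => //.
  move=> i. rewrite mvE big1 /=; first by rewrite Rmult_0_l. move=> j _. rewrite Hz. apply: mul0r.
- by rewrite Ec in Hole.
- rewrite Ec /= in Hole.
  have Hle : lmin <= lmax by apply Hmn; case: Hmx.
  have Hlk : lmax <= kappa_kap * lmin.
    have : lmax / lmin * lmin <= kappa_kap * lmin by apply Rmult_le_compat_r; lra.
    have -> : lmax / lmin * lmin = lmax by field; lra. done.
  have Hlm := Hmin lmin Hmn.
  have Hop := opnorm_le _ M lmax Hsym Hpsd Hmx ltac:(lra) s.
  apply (Rle_trans _ _ _ Hop).
  have : lmax * vnorm s <= kappa_kap * lmin * vnorm s by apply Rmult_le_compat_r.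
  have : kappa_kap * lmin <= kappa_kap * (kappa_lam * rpow (vnorm s) alpha) by apply Rmult_le_compat_l.
  nra.
Qed.

Theorem lemma2p3 (n : nat) (alpha : R) (f : vec n -> R) (g : vec n -> vec n)
  (H : vec n -> mat n) (L_g L_H : R)
  (x s r : nat -> vec n) (M : nat -> mat n)
  (kappa_rg kappa_rs kappa_lam kappa_kap : R) :
  0 <= alpha <= 1 ->
  (* Assumption A.alpha *)
  is_gradient f g -> is_derivative_map g H -> mat_continuous H ->
  (exists lb, forall y, lb <= f y) ->
  0 <= L_g -> (forall y z, vnorm (vsub (g y) (g z)) <= L_g * vnorm (vsub y z)) ->
  0 <= L_H ->
  (forall y z (v : vec n),
      vnorm (mv (msub (H y) (H z)) v) <= L_H * rpow (vnorm (vsub y z)) alpha * vnorm v) ->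
  (* the iteration *)
  0 <= kappa_rg < 1 -> 0 < kappa_rs -> 1 < kappa_lam -> 1 <= kappa_kap ->
  (forall k i, x (S k) i = x k i + s k i) ->
  (forall k i, mv (madd (H (x k)) (M k)) (s k) i = - g (x k) i + r k i) ->
  (forall k, vnorm (r k) <= Rmin (kappa_rg * vnorm (g (x k)))
                                  (kappa_rs * vnorm (mv (M k) (s k)))) ->
  (forall k, mat_symmetric (M k) /\ psd (M k)) ->
  (forall k l, is_lambda_min (M k) l -> l <= kappa_lam * rpow (vnorm (s k)) alpha) ->
  (forall k, exists c, is_cond_number (M k) c /\ ole c kappa_kap) ->
  let kappa_s := Rpower (L_H / (1 + alpha) + kappa_kap * (1 + kappa_rs) * kappa_lam)
                        (- (1 / (1 + alpha))) in
  0 < kappa_s /\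
  forall k, kappa_s * rpow (vnorm (g (x (S k)))) (1 / (1 + alpha)) <= vnorm (s k).
Proof.
move=> Ha Hgrad Hder Hcont Hlb HLg HLip HLH Hhol Hrg Hrs Hlam Hkap Hx Hsys Hr HM Hmin Hcond kappa_s.
set A := L_H / (1 + alpha) + kappa_kap * (1 + kappa_rs) * kappa_lam.
have HA0 : 0 < kappa_kap * (1 + kappa_rs) * kappa_lam.
  apply Rmult_lt_0_compat; [apply Rmult_lt_0_compat|]; lra.
have HA1 : 0 <= L_H / (1 + alpha) by apply Rmult_le_pos; [lra | left; apply Rinv_0_lt_compat; lra].
have HA : 0 < A by rewrite /A; lra.
have Hks : 0 < kappa_s by apply exp_pos.
split => // k.
set sk := s k. set u := g (x (S k)). set Mk := M k.
have Hs := vnorm_ge0 _ sk. have Hun := vnorm_ge0 _ u.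
have Hrp := rpow_ge0 (vnorm sk) alpha.
set Sv := rpow (vnorm sk) alpha * vnorm sk.
have HS : 0 <= Sv by apply Rmult_le_pos.
have HMs : vnorm (mv Mk sk) <= kappa_kap * kappa_lam * Sv.
  rewrite /Sv -Rmult_assoc. apply Ms_bound; try lra; [apply HM|apply Hmin|apply Hcond].
have Hrk : vnorm (r k) <= kappa_rs * vnorm (mv Mk sk) := Rle_trans _ _ _ (Hr k) (Rmin_r _ _).
have Exs : x (S k) = vadd (x k) sk by apply: funext => i; rewrite Hx.
have Ht := taylor _ g H L_H alpha (x k) sk u ltac:(lra) Hder HLH Hhol.
rewrite -Exs -/u in Ht.
have Eid : forall i, g (x k) i + mv (H (x k)) sk i = r k i - mv Mk sk i.
  move=> i. have := Hsys k i. rewrite mv_madd. rewrite -/sk -/Mk. lra.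
have Edot : dot u u = dot u (fun i => u i - g (x k) i - mv (H (x k)) sk i)
                      + dot u (r k) - dot u (mv Mk sk).
  rewrite -dot_add_r -dot_sub_r. apply dot_ext => // i. have := Eid i. lra.
have C1 := CS_norm _ u (r k).
have C2 := CS_abs _ u (mv Mk sk).
have C2' := Rle_abs (- dot u (mv Mk sk)). rewrite Rabs_Ropp in C2'.
have Hsq : vnorm u * vnorm u <= vnorm u * (A * Sv).
  rewrite vnorm_sq Edot.
  have E3 : vnorm u * (A * Sv) = vnorm u * L_H * rpow (vnorm sk) alpha * vnorm sk / (1 + alpha)
           + vnorm u * ((1 + kappa_rs) * (kappa_kap * kappa_lam * Sv)).
    rewrite /A /Sv. field. lra.
  rewrite E3.
  have : vnorm u * vnorm (r k) + vnorm u * vnorm (mv Mk sk) <=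
         vnorm u * ((1 + kappa_rs) * (kappa_kap * kappa_lam * Sv)).
    rewrite -Rmult_plus_distr_l. apply Rmult_le_compat_l => //.
    have : vnorm (r k) + vnorm (mv Mk sk) <= (1 + kappa_rs) * vnorm (mv Mk sk) by lra.
    move=> H1. apply (Rle_trans _ _ _ H1). apply Rmult_le_compat_l; lra.
  lra.
have Hub : vnorm u <= A * Sv.
  destruct (Rle_lt_or_eq_dec _ _ Hun) as [Hp|H0].
  - apply (Rmult_le_reg_l (vnorm u)) => //.
  - rewrite -H0. apply Rmult_le_pos; lra.
set beta := 1 / (1 + alpha).
have Hb : 0 < beta by apply Rdiv_lt_0_compat; lra.
destruct (Rle_lt_or_eq_dec _ _ Hun) as [Hp|H0].
- rewrite rpow_pos //.
  have HSp : 0 < Sv by nra.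
  have Hsp : 0 < vnorm sk.
    destruct (Rle_lt_or_eq_dec _ _ Hs) as [|E] => //. rewrite /Sv -E Rmult_0_r in HSp. lra.
  have ES : Sv = Rpower (vnorm sk) (1 + alpha).
    rewrite /Sv rpow_pos // Rpower_plus Rpower_1 //. ring.
  have H1 : Rpower (vnorm u) beta <= Rpower (A * Sv) beta.
    apply Rle_Rpower_l; lra.
  have E2 : Rpower (A * Sv) beta = Rpower A beta * vnorm sk.
    rewrite -Rpower_mult_distr //. rewrite ES Rpower_mult.
    have -> : (1 + alpha) * beta = 1 by rewrite /beta; field; lra.
    rewrite Rpower_1 //.
  have E4 : kappa_s * Rpower A beta = 1.
    rewrite /kappa_s -/A -/beta -Rpower_plus. have -> : - beta + beta = 0 by ring.
    apply Rpower_O => //.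
  have : kappa_s * Rpower (vnorm u) beta <= kappa_s * Rpower (A * Sv) beta
    by apply Rmult_le_compat_l; lra.
  rewrite E2 -Rmult_assoc E4 Rmult_1_l //.
- rewrite -H0 /rpow. case: (Req_dec_T 0 0) => E0 /=; last lra.
  case: (Req_dec_T beta 0) => E1 /=; first lra.
  rewrite Rmult_0_r //.
Qed.
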